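(* Let $\pi:A^\infty\to LA^\infty$ be defined by $\pi(\varepsilon)=*$ and $\pi(aw)=(a,w)$ for $a\in A$, $w\in A^\infty$. Then $\pi$ is measurable and $(A^\infty,\pi)$ is a final $L$-coalgebra in $\mathbf{Meas}$: for every measurable $\gamma:X\to LX$ there is a unique measurable $\varphi:X\to A^\infty$ with $\pi\circ\varphi=L\varphi\circ\gamma$.
   Context: $A$ is a finite alphabet, $A^*$ finite words (empty word $\varepsilon$), $A^\omega$ infinite words, $A^\infty=A^*\cup A^\omega$, $wS=\{wv\mid v\in S\}$. $\Sigma_{A^\infty}$ is the $\sigma$-algebra generated by $S_\infty=\{\emptyset\}\cup\{\{w\}\mid w\in A^*\}\cup\{wA^\infty\mid w\in A^*\}$. Work in $\mathbf{Meas}$; $1=\{*\}$; the functor $L$ is $LX=A\times X+1$ with $\sigma$-algebra $(\mathcal P(A)\otimes\Sigma_X)\oplus\mathcal P(1)$ (the sum $\sigma$-algebra on a disjoint union consists of the disjoint unions of measurable pieces), and $Lf=\mathrm{id}_A\times f+\mathrm{id}_1$. *)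

(* Defs.v *)
From mathcomp Require Import all_boot.
From Stdlib Require Import List.

Set Implicit Arguments.
Unset Strict Implicit.
Unset Printing Implicit Defensive.

Definition pset (T : Type) := T -> Prop.

Definition is_sigma (T : Type) (S : pset T -> Prop) : Prop :=
  S (fun _ => False) /\
  (forall E, S E -> S (fun x => ~ E x)) /\
  (forall F : nat -> pset T, (forall n, S (F n)) -> S (fun x => exists n, F n x)).

Definition gen_sigma (T : Type) (G : pset T -> Prop) : pset T -> Prop :=
  fun E => forall S, is_sigma S -> (forall B, G B -> S B) -> S E.

Definition measurable_fun (X Y : Type) (SX : pset X -> Prop) (SY : pset Y -> Prop)
  (f : X -> Y) : Prop :=
  forall E, SY E -> SX (fun x => E (f x)).

(* A word is a sequence nat -> option A which, once undefined (None), stays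
   undefined: finite words are those that eventually hit None, infinite ones
   never do. *)
Definition word (A : Type) :=
  {w : nat -> option A | forall n, w n = None -> w (S n) = None}.

Definition wat (A : Type) (w : word A) (n : nat) : option A := proj1_sig w n.

Lemma of_list_prop (A : Type) (l : list A) :
  forall n, nth_error l n = None -> nth_error l (S n) = None.
Proof.
  move=> n /nth_error_None H; apply/nth_error_None.
  apply: le_S; exact: H.
Qed.

Definition of_list (A : Type) (l : list A) : word A :=
  exist _ (fun n => nth_error l n) (@of_list_prop A l).

(* v belongs to the cylinder l A^infty, i.e. l is a prefix of v. *)
Definition has_prefix (A : Type) (l : list A) (v : word A) : Prop :=
  forall n, n < length l -> wat v n = nth_error l n.

Definition S_inf (A : Type) : pset (word A) -> Prop :=
  fun E =>
    E = (fun _ => False) \/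
    (exists l : list A, E = (fun v => v = of_list l)) \/
    (exists l : list A, E = (fun v => has_prefix l v)).

Definition Ainf_sigma (A : Type) : pset (word A) -> Prop := gen_sigma (@S_inf A).

Definition L (A X : Type) := (A * X + unit)%type.

Definition prod_sigma (A X : Type) (SX : pset X -> Prop) : pset (A * X) -> Prop :=
  gen_sigma (fun R => exists (B : pset A) (C : pset X),
                 SX C /\ R = (fun p => B p.1 /\ C p.2)).

Arguments prod_sigma A {X} SX _.

(* (P(A) (x) Sigma_X) (+) P(1): a set is measurable iff its A x X part is
   measurable (every subset of 1 is measurable). *)
Definition L_sigma (A X : Type) (SX : pset X -> Prop) : pset (L A X) -> Prop :=
  fun E => prod_sigma A SX (fun p => E (inl p)).

Arguments L_sigma A {X} SX _.

Definition Lmap (A X Y : Type) (f : X -> Y) (u : L A X) : L A Y :=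
  match u with
  | inl (a, x) => inl (a, f x)
  | inr t => inr t
  end.

Lemma tail_prop (A : Type) (w : word A) :
  forall n, wat w (S n) = None -> wat w (S (S n)) = None.
Proof. move=> n; exact: (proj2_sig w (S n)). Qed.

Definition wtail (A : Type) (w : word A) : word A :=
  exist _ (fun n => wat w (S n)) (@tail_prop A w).

Definition piw (A : Type) (w : word A) : L A (word A) :=
  match wat w 0 with
  | None => inr tt
  | Some a => inl (a, wtail w)
  end.

(* Main.v *)
Require Import Defs.
From mathcomp Require Import all_boot.
From Stdlib Require Import List Classical FunctionalExtensionality PropExtensionality ProofIrrelevance.

Set Implicit Arguments.
Unset Strict Implicit.
Unset Printing Implicit Defensive.

Lemma pset_ext T (E E' : pset T) : (forall x, E x <-> E' x) -> E = E'.
Proof. move=> H; apply: functional_extensionality => x; apply: propositional_extensionality; exact: H. Qed.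

Lemma sig_ext T (S : pset T -> Prop) E E' : S E -> (forall x, E x <-> E' x) -> S E'.
Proof. by move=> HE /pset_ext <-. Qed.

Section Sig.
Variables (T : Type) (S : pset T -> Prop) (HS : is_sigma S).
Lemma sig0 : S (fun _ => False). Proof. by case: HS. Qed.
Lemma sigC E : S E -> S (fun x => ~ E x). Proof. by case: HS => _ [H _]; apply: H. Qed.
Lemma sigU (F : nat -> pset T) : (forall n, S (F n)) -> S (fun x => exists n, F n x).
Proof. by case: HS => _ [_ H]; apply: H. Qed.
Lemma sigTT : S (fun _ => True).
Proof. apply: sig_ext (sigC sig0) _ => x; tauto. Qed.
Lemma sigUc (F : nat -> pset T) : (forall n, S (F n)) -> S (fun x => forall n, F n x).
Proof.
move=> H; apply: sig_ext (sigC (sigU (fun n => sigC (H n)))) _ => x; split.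
- move=> Hn n; apply: NNPP => Hc; apply: Hn; by exists n.
- move=> Hn [n Hc]; exact: Hc (Hn n).
Qed.
Lemma sigU2 E1 E2 : S E1 -> S E2 -> S (fun x => E1 x \/ E2 x).
Proof.
move=> H1 H2; apply: sig_ext (@sigU (fun n => if n is 0 then E1 else E2) _) _.
- by case.
- move=> x; split; [by case=> [[|n]]; auto | case=> H; [by exists 0 | by exists 1]].
Qed.
Lemma sigI2 E1 E2 : S E1 -> S E2 -> S (fun x => E1 x /\ E2 x).
Proof.
move=> H1 H2; apply: sig_ext (@sigUc (fun n => if n is 0 then E1 else E2) _) _.
- by case.
- move=> x; split; [move=> H; exact: (conj (H 0) (H 1)) | by case=> ?? [|n]].
Qed.
End Sig.

Lemma gen_is_sigma T (G : pset T -> Prop) : is_sigma (gen_sigma G).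
Proof.
split; [|split].
- move=> S HS _; exact: sig0 HS.
- move=> E HE S HS HG; exact: (@sigC T S HS E (HE S HS HG)).
- move=> F HF S HS HG; apply: (@sigU T S HS F) => n; exact: HF n S HS HG.
Qed.
Lemma gen_incl T (G : pset T -> Prop) B : G B -> gen_sigma G B.
Proof. by move=> HB S _ HG; apply: HG. Qed.

Lemma word_ext (A : Type) (v w : word A) : (forall n, wat v n = wat w n) -> v = w.
Proof.
case: v => f Hf; case: w => g Hg; rewrite /wat /= => H.
have e : f = g by apply: functional_extensionality.
subst g; f_equal; apply: proof_irrelevance.
Qed.

Lemma word_none (A : Type) (w : word A) : wat w 0 = None -> forall k, wat w k = None.
Proof. move=> H; elim=> [|k IH] //; exact: (proj2_sig w k IH). Qed.

Lemma nil_iff (A : Type) (w : word A) : w = of_list nil <-> wat w 0 = None.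
Proof.
split; first by move=> ->.
move=> H; apply: word_ext => n; rewrite (word_none H); by case: n.
Qed.

Lemma Ainf_sig (A : Type) : is_sigma (@Ainf_sigma A).
Proof. exact: gen_is_sigma. Qed.
Lemma Ainf_pt (A : Type) (l : list A) : Ainf_sigma (fun v => v = of_list l).
Proof. apply: gen_incl; right; left; by exists l. Qed.
Lemma Ainf_cyl (A : Type) (l : list A) : Ainf_sigma (fun v => has_prefix l v).
Proof. apply: gen_incl; right; right; by exists l. Qed.

Lemma Ainf_cons (A : Type) (a : A) C : Ainf_sigma C ->
  Ainf_sigma (fun w => wat w 0 = Some a /\ C (wtail w)).
Proof.
move=> HC; apply: (HC (fun C => Ainf_sigma (fun w => wat w 0 = Some a /\ C (wtail w)))).
- split; [|split].
  + apply: sig_ext (sig0 (@Ainf_sig A)) _ => x; tauto.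
  + move=> E HE; apply: sig_ext (sigI2 (@Ainf_sig A) (Ainf_cyl [:: a]) (sigC (@Ainf_sig A) HE)) _.
    move=> w; have -> : has_prefix [:: a] w <-> wat w 0 = Some a.
      split; first by move=> H; exact: H 0 isT.
      by move=> H [|n] Hn //=.
    tauto.
  + move=> F HF; apply: sig_ext (sigU (@Ainf_sig A) HF) _ => w; firstorder.
- move=> B [->|[[l ->]|[l ->]]].
  + apply: sig_ext (sig0 (@Ainf_sig A)) _ => x; tauto.
  + apply: sig_ext (Ainf_pt (a :: l)) _ => w; split.
    * by move=> ->; split => //; apply: word_ext.
    * move=> [H0 Ht]; apply: word_ext => -[|n] //=.
      by rewrite -[wat w n.+1]/(wat (wtail w) n) Ht.
  + apply: sig_ext (Ainf_cyl (a :: l)) _ => w; split.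
    * move=> H; split; first exact: H 0 isT.
      move=> n Hn; exact: H n.+1 Hn.
    * move=> [H0 Ht] [|n] Hn /=; [exact: H0 | exact: Ht n Hn].
Qed.

Lemma Ainf_Q (A : finType) (R : pset (A * word A)) : prod_sigma A (@Ainf_sigma A) R ->
  Ainf_sigma (fun w => match wat w 0 with Some a => R (a, wtail w) | None => False end).
Proof.
move=> HR; apply: (HR (fun R => Ainf_sigma (fun w => match wat w 0 with Some a => R (a, wtail w) | None => False end))).
- split; [|split].
  + apply: sig_ext (sig0 (@Ainf_sig A)) _ => w; by case: (wat w 0).
  + move=> E HE; apply: sig_ext (sigI2 (@Ainf_sig A) (sigC (@Ainf_sig A) (Ainf_pt nil)) (sigC (@Ainf_sig A) HE)) _.
    move=> w; have := nil_iff w; case: (wat w 0) => [b|] h; [have hb : Some b <> None by [] |]; tauto.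
  + move=> F HF; apply: sig_ext (sigU (@Ainf_sig A) HF) _ => w.
    case: (wat w 0) => [b|]; firstorder.
- move=> _ [B [C [HC ->]]].
  pose F n := fun w => exists a, unpickle n = Some a /\ B a /\ wat w 0 = Some a /\ C (wtail w).
  apply: sig_ext (@sigU _ _ (@Ainf_sig A) F _) _.
  + move=> n; rewrite /F; case: (unpickle n) => [a|].
    * case: (classic (B a)) => Ba.
      - apply: sig_ext (Ainf_cons a HC) _ => w; split.
        + move=> [H1 H2]; exists a; tauto.
        + by move=> [a' [[<-] [_ [H1 H2]]]].
      - apply: sig_ext (sig0 (@Ainf_sig A)) _ => w; split => //.
        by move=> [a' [[<-] [Ba' _]]].
    * apply: sig_ext (sig0 (@Ainf_sig A)) _ => w; split => //.
      by move=> [a' [H _]].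
  + move=> w /=; split.
    * by move=> [n [a [_ [Ba [-> Cw]]]]].
    * case e: (wat w 0) => [a|] // [Ba Cw]; exists (pickle a); exists a.
      by rewrite pickleK.
Qed.

Fixpoint fn (A X : Type) (g : X -> L A X) (n : nat) (x : X) : option A :=
  match g x with
  | inl (a, x') => if n is S m then fn g m x' else Some a
  | inr _ => None
  end.

Lemma fn_prop (A X : Type) (g : X -> L A X) x n : fn g n x = None -> fn g (S n) x = None.
Proof.
elim: n x => [|n IH] x /=; case: (g x) => [[a x']|t] //=.
exact: IH.
Qed.

Definition phi0 (A X : Type) (g : X -> L A X) (x : X) : word A :=
  @exist _ (fun w => forall n, w n = None -> w (S n) = None) (fun n => fn g n x) (fun n => @fn_prop A X g x n).

Theorem mainTheorem8 (A : finType) :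
  measurable_fun (@Ainf_sigma A) (L_sigma A (@Ainf_sigma A)) (@piw A) /\
  (forall (X : Type) (SX : pset X -> Prop), is_sigma SX ->
   forall gamma : X -> L A X, measurable_fun SX (L_sigma A SX) gamma ->
   exists! phi : X -> word A,
     measurable_fun SX (@Ainf_sigma A) phi /\
     (forall x, piw (phi x) = Lmap phi (gamma x))).
Proof.
split.
- move=> E HE.
  have HQ := Ainf_Q HE.
  have HN : Ainf_sigma (fun w : word A => wat w 0 = None /\ E (inr tt)).
    case: (classic (E (inr tt))) => H.
    + apply: sig_ext (Ainf_pt nil) _ => w; rewrite nil_iff; tauto.
    + apply: sig_ext (sig0 (@Ainf_sig A)) _ => w; tauto.
  apply: sig_ext (sigU2 (@Ainf_sig A) HQ HN) _ => w /=.
  rewrite /piw; case: (wat w 0) => [a|] /=; [have hb : Some a <> None by [] |]; tauto.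
- move=> X SX HSX g Hg.
  have Hfn : forall n o, SX (fun x => fn g n x = o).
    elim=> [|n IH] o.
    + apply: sig_ext (Hg (fun u => match u with inl p => Some p.1 = o | inr _ => None = o end) _) _.
      * apply: gen_incl; exists (fun a => Some a = o), (fun _ => True); split.
          exact: sigTT HSX.
        apply: pset_ext => p /=; tauto.
      * move=> x /=; case: (g x) => [[a y]|t] /=; tauto.
    + apply: sig_ext (Hg (fun u => match u with inl p => fn g n p.2 = o | inr _ => None = o end) _) _.
      * apply: gen_incl; exists (fun _ => True), (fun y => fn g n y = o); split.
          exact: IH.
        apply: pset_ext => p /=; tauto.
      * move=> x /=; case: (g x) => [[a y]|t] /=; tauto.
  exists (phi0 g); split; [split|].
  + move=> E HE; apply: (HE (fun E => SX (fun x => E (phi0 g x)))).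
    * split; [exact: sig0 HSX | split].
        move=> E' H; exact: (@sigC X SX HSX _ H).
      move=> F HF; exact: (@sigU X SX HSX _ HF).
    * move=> B [->|[[l ->]|[l ->]]].
      - exact: sig0 HSX.
      - apply: sig_ext (sigUc HSX (fun n => Hfn n (nth_error l n))) _ => x; split.
          by move=> H; apply: word_ext.
        move=> H n; change (wat (phi0 g x) n = nth_error l n); by rewrite H.
      - have HF : forall n, SX (fun x => n < length l -> fn g n x = nth_error l n).
          move=> n; case h: (n < length l).
          + apply: sig_ext (Hfn n (nth_error l n)) _ => x; split; first by move=> H _.
            by move=> H; exact: H isT.
          + apply: sig_ext (sigTT HSX) _ => x; by split.
        apply: sig_ext (sigUc HSX HF) _ => x; split; exact id.
  + move=> x; rewrite /piw.
    have h0 : wat (phi0 g x) 0 = match g x with inl (a, _) => Some a | inr _ => None end := erefl.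
    rewrite h0; case e: (g x) => [[a x']|[]] //=.
    congr (inl (a, _)); apply: word_ext => n.
    transitivity (fn g n.+1 x); first done.
    by rewrite /= e.
  + move=> psi [_ Hpsi]; apply: functional_extensionality => x.
    apply: word_ext => n; elim: n x => [|n IH] x.
    * move: (Hpsi x); rewrite /piw /=.
      case: (wat (psi x) 0) => [b|]; case: (g x) => [[a x']|[]] /=; congruence.
    * have H := Hpsi x; rewrite /piw in H.
      rewrite /=.
      case e: (wat (psi x) 0) H => [b|]; case: (g x) => [[a x']|[]] /= H; try discriminate.
      - transitivity (wat (psi x') n); first exact: IH x'. by case: H => _ <-.
      - symmetry; exact: (word_none e n.+1).
Qed.
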